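(* Let $\Gamma$ be an abelian group and $A$ a unital $\Gamma$-graded ring. The following are equivalent: (1) $A$ is a graded right Rickart ring; (2) every graded principal right ideal of $A$ (i.e. every right ideal $xA$ with $x$ homogeneous) is a projective right $A$-module; (3) every graded principal right ideal of $A$ is a graded projective right $A$-module. Consequently, if a $\Gamma$-graded ring $A$ is right Rickart (as an ungraded ring), then it is graded right Rickart.
   Context: A $\Gamma$-graded ring is $A=\bigoplus_{\gamma\in\Gamma}A_\gamma$ with additive subgroups $A_\gamma$ and $A_\gamma A_\delta\subseteq A_{\gamma+\delta}$; elements of $\bigcup_\gamma A_\gamma$ are homogeneous. For $X\subseteq A$, $\operatorname{ann}_r(X)=\{a\in A: xa=0 \ \forall x\in X\}$. A ring is right Rickart if $\operatorname{ann}_r(x)$ is generated as a right ideal by an idempotent for every $x\in A$. A $\Gamma$-graded ring $A$ is graded right Rickart if for every homogeneous $x$, $\operatorname{ann}_r(x)$ is generated as a right ideal by a homogeneous idempotent. A graded right module is $M=\bigoplus_\gamma M_\gamma$ with $M_\gamma A_\delta\subseteq M_{\gamma+\delta}$; a graded projective module is one graded isomorphic to a direct summand of a graded free module (a free module with a homogeneous basis, equivalently a direct sum of shifts $A(\gamma)$, where $M(\delta)_\gamma=M_{\delta+\gamma}$). *)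

(* Defs.v *)
From HB Require Import structures.
From mathcomp Require Import all_boot all_order all_algebra.
From Stdlib Require Lists.List.
Set Implicit Arguments. Unset Strict Implicit. Unset Printing Implicit Defensive.
Import GRing.Theory.
Local Open Scope ring_scope.

Section Graded.
Variables (G : zmodType) (A : pzRingType).

Definition is_grading (Ad : G -> A -> Prop) : Prop :=
  (forall g, Ad g 0) /\
  (forall g a b, Ad g a -> Ad g b -> Ad g (a - b)) /\
  (forall g h a b, Ad g a -> Ad h b -> Ad (g + h) (a * b)) /\
  (forall a : A, exists (s : seq G) (f : G -> A),
      uniq s /\ (forall g, Ad g (f g)) /\ a = \sum_(g <- s) f g) /\
  (forall (s : seq G) (f : G -> A), uniq s ->
      (forall g, g \in s -> Ad g (f g)) -> \sum_(g <- s) f g = 0 ->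
      forall g, g \in s -> f g = 0).

Definition homogeneous (Ad : G -> A -> Prop) (x : A) : Prop := exists g, Ad g x.

End Graded.

Section Rings.
Variable A : pzRingType.

Definition ann_r_gen_by (x e : A) : Prop :=
  forall a : A, x * a = 0 <-> exists b, a = e * b.

Definition right_rickart : Prop :=
  forall x : A, exists e : A, e * e = e /\ ann_r_gen_by x e.

Definition graded_right_rickart (G : zmodType) (Ad : G -> A -> Prop) : Prop :=
  forall x : A, homogeneous Ad x ->
    exists e : A, homogeneous Ad e /\ e * e = e /\ ann_r_gen_by x e.

Definition in_xA (x y : A) : Prop := exists a, y = x * a.

(* finitely supported families: the free right A-module on I is the set of
   finitely supported c : I -> A with pointwise operations. *)
Definition finsupp (I : Type) (c : I -> A) : Prop :=
  exists s : seq I, forall k, ~ List.In k s -> c k = 0.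

(* Right A-linear maps  i : xA -> F  and  p : F -> xA,  F free on I,
   with p o i = id, i.e. xA is isomorphic to a direct summand of F. *)
Definition retract_of_free (x : A) (I : Type)
    (i : A -> I -> A) (p : (I -> A) -> A) : Prop :=
  (forall y, in_xA x y -> finsupp (i y)) /\
  (forall y z, in_xA x y -> in_xA x z -> forall k, i (y + z) k = i y k + i z k) /\
  (forall y a, in_xA x y -> forall k, i (y * a) k = i y k * a) /\
  (forall c, finsupp c -> in_xA x (p c)) /\
  (forall c d, finsupp c -> finsupp d -> p (fun k => c k + d k) = p c + p d) /\
  (forall c a, finsupp c -> p (fun k => c k * a) = p c * a) /\
  (forall y, in_xA x y -> p (i y) = y).

Definition principal_projective (x : A) : Prop :=
  exists (I : Type) (i : A -> I -> A) (p : (I -> A) -> A), retract_of_free x i p.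

(* xA (graded by (xA)_g = xA \cap A_g) is a graded projective right module:
   a graded retract of the graded free module  (+)_k A(delta k),
   whose degree-g part consists of the c with c k in A_(delta k + g). *)
Definition principal_graded_projective (G : zmodType) (Ad : G -> A -> Prop)
    (x : A) : Prop :=
  exists (I : Type) (delta : I -> G) (i : A -> I -> A) (p : (I -> A) -> A),
    retract_of_free x i p /\
    (forall g y, in_xA x y -> Ad g y -> forall k, Ad (delta k + g) (i y k)) /\
    (forall g c, finsupp c -> (forall k, Ad (delta k + g) (c k)) -> Ad g (p c)).

End Rings.

(* Main.v *)
Require Import Defs.
From HB Require Import structures.
From mathcomp Require Import all_boot all_order all_algebra.
Set Implicit Arguments. Unset Strict Implicit. Unset Printing Implicit Defensive.
Import GRing.Theory.
Local Open Scope ring_scope.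

Lemma gr_sub (G : zmodType) (A : pzRingType) (Ad : G -> A -> Prop) :
  is_grading Ad -> forall g a b, Ad g a -> Ad g b -> Ad g (a - b).
Proof. by case=> _ [h _]. Qed.
Lemma gr_0 (G : zmodType) (A : pzRingType) (Ad : G -> A -> Prop) :
  is_grading Ad -> forall g, Ad g 0.
Proof. by case. Qed.
Lemma gr_N (G : zmodType) (A : pzRingType) (Ad : G -> A -> Prop) :
  is_grading Ad -> forall g a, Ad g a -> Ad g (- a).
Proof. move=> h g a Ha; rewrite -sub0r; apply: gr_sub => //; exact: gr_0. Qed.
Lemma gr_D (G : zmodType) (A : pzRingType) (Ad : G -> A -> Prop) :
  is_grading Ad -> forall g a b, Ad g a -> Ad g b -> Ad g (a + b).
Proof. move=> h g a b Ha Hb; rewrite -[b]opprK; apply: gr_sub => //; exact: gr_N. Qed.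
Lemma gr_M (G : zmodType) (A : pzRingType) (Ad : G -> A -> Prop) :
  is_grading Ad -> forall g h a b, Ad g a -> Ad h b -> Ad (g + h) (a * b).
Proof. by case=> _ [_ [h _]]. Qed.
Lemma gr_dec (G : zmodType) (A : pzRingType) (Ad : G -> A -> Prop) :
  is_grading Ad -> forall a : A, exists (s : seq G) (f : G -> A),
      uniq s /\ (forall g, Ad g (f g)) /\ a = \sum_(g <- s) f g.
Proof. by case=> _ [_ [_ [h _]]]. Qed.
Lemma gr_dir (G : zmodType) (A : pzRingType) (Ad : G -> A -> Prop) :
  is_grading Ad -> forall (s : seq G) (f : G -> A), uniq s ->
      (forall g, g \in s -> Ad g (f g)) -> \sum_(g <- s) f g = 0 ->
      forall g, g \in s -> f g = 0.
Proof. by case=> _ [_ [_ [_ h]]]. Qed.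

Lemma gr_comp (G : zmodType) (A : pzRingType) (Ad : G -> A -> Prop) :
  is_grading Ad -> forall (t : seq G) (F : G -> A) g y, uniq t ->
  (forall m, Ad m (F m)) -> Ad g y -> \sum_(m <- t) F m = y ->
  y = if g \in t then F g else 0.
Proof.
move=> hgr t F g y ut hF hy hs.
case: ifP => gt.
- pose F2 := fun m => if m == g then F g - y else F m.
  have h2 : \sum_(m <- t) F2 m = 0.
    rewrite (bigD1_seq g) //= {1}/F2 eqxx.
    rewrite (eq_bigr F) => [|m /negbTE]; last by rewrite /F2 => ->.
    rewrite -hs (bigD1_seq g) //=.
    by rewrite opprD addrA subrr add0r addNr.
  have := gr_dir hgr ut _ h2 gt.
  rewrite /F2 eqxx => h; apply/eqP; rewrite eq_sym -subr_eq0; apply/eqP; apply: h.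
  move=> m _; case: eqP => [->|_] //; exact: gr_sub.
- pose F2 := fun m => if m == g then - y else F m.
  have u2 : uniq (g :: t) by rewrite /= gt.
  have h2 : \sum_(m <- g :: t) F2 m = 0.
    rewrite big_cons {1}/F2 eqxx (eq_big_seq F) ?hs ?addNr // => m mt.
    by rewrite /F2; case: eqP => // E; move: gt; rewrite -E mt.
  have := gr_dir hgr u2 _ h2 (mem_head _ _).
  rewrite /F2 eqxx => h; rewrite -[y]opprK h ?oppr0 //.
  move=> m _; case: eqP => [->|_] //; exact: gr_N.
Qed.

Lemma gr_shift (G : zmodType) (A : pzRingType) (Ad : G -> A -> Prop) :
  is_grading Ad -> forall (s : seq G) (F : G -> A) d g y, uniq s ->
  (forall k, Ad (k + d) (F k)) -> Ad g y -> \sum_(k <- s) F k = y ->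
  y = if (g - d) \in s then F (g - d) else 0.
Proof.
move=> hgr s F d g y us hF hy hs.
have := gr_comp hgr (t := map (fun k => k + d) s) (F := fun m => F (m - d)) _ _ hy.
have mm : (g \in map (fun k => k + d) s) = ((g - d) \in s).
  by rewrite -[in LHS](subrK d g) (mem_map (addIr d)).
rewrite mm; apply.
- by rewrite (map_inj_uniq (addIr d)).
- by move=> m; have := hF (m - d); rewrite subrK.
- by rewrite big_map -hs; apply: eq_bigr => k _; rewrite addrK.
Qed.

Lemma gr_one (G : zmodType) (A : pzRingType) (Ad : G -> A -> Prop) :
  is_grading Ad -> Ad 0 1.
Proof.
move=> hgr; have [s [u [us [hu e1]]]] := gr_dec hgr 1.
pose u0 := if (0 : G) \in s then u 0 else 0.
have h0 : Ad 0 u0 by rewrite /u0; case: ifP => _ //; exact: gr_0.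
have hk : forall k, k \in s -> u k = u k * u0.
  move=> k ks; rewrite /u0.
  have := gr_shift hgr (F := fun j => u k * u j) (d := k) (g := k) (y := u k) us _ (hu k).
  rewrite subrr; case: ifP => _; [|rewrite mulr0]; apply => //.
  - by move=> j; rewrite addrC; apply: gr_M.
  - by rewrite -[u k in RHS]mulr1 e1 big_distrr.
  - by move=> j; rewrite addrC; apply: gr_M.
  - by rewrite -[u k in RHS]mulr1 e1 big_distrr.
suff -> : (1 : A) = u0 by [].
have : 1 * u0 = 1.
  rewrite e1 big_distrl /=; apply: eq_big_seq => k ks; by rewrite -hk.
by rewrite mul1r => ->.
Qed.

Lemma gr_idem (G : zmodType) (A : pzRingType) (Ad : G -> A -> Prop) :
  is_grading Ad -> forall d e, Ad d e -> e * e = e -> Ad 0 e.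
Proof.
move=> hgr d e he ee.
have he2 : Ad (d + d) e by rewrite -ee; apply: gr_M.
case: (eqVneq d 0) => [<- //|dn0].
have ne : d + d != d by apply: contra dn0 => /eqP H; apply/eqP; apply: (addrI d); by rewrite addr0.
pose f := fun k => if k == d then e else - e.
have u2 : uniq [:: d + d; d] by rewrite /= inE ne.
have h : f (d + d) = 0.
  apply: (gr_dir hgr u2 _ _ (mem_head _ _)).
  - move=> k; rewrite !inE; case/orP => /eqP ->; rewrite /f ?(negbTE ne) ?eqxx //; exact: gr_N.
  - by rewrite big_cons big_seq1 /f (negbTE ne) eqxx addNr.
move: h; rewrite /f (negbTE ne) => h.
have -> : e = 0 by rewrite -[e]opprK h oppr0.
exact: gr_0.
Qed.

Lemma gr_homog_gen (G : zmodType) (A : pzRingType) (Ad : G -> A -> Prop) :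
  is_grading Ad -> forall h g x y a, Ad h x -> Ad g y -> y = x * a ->
  exists a', Ad (g - h) a' /\ y = x * a'.
Proof.
move=> hgr h g x y a hx hy ya.
have [s [f [us [hf ea]]]] := gr_dec hgr a.
have E := gr_shift hgr (F := fun k => x * f k) (d := h) us _ hy.
move: E; case: ifP => _ E.
- exists (f (g - h)); split => //; apply: E.
  + by move=> k; rewrite addrC; apply: gr_M.
  + by rewrite -big_distrr -ea.
- exists 0; rewrite mulr0; split; first exact: gr_0.
  apply: E.
  + by move=> k; rewrite addrC; apply: gr_M.
  + by rewrite -big_distrr -ea.
Qed.

From Stdlib Require Import ClassicalEpsilon FunctionalExtensionality ClassicalDescription.

Definition pick (A : pzRingType) (x y : A) : A :=
  epsilon (inhabits 0) (fun a : A => y = x * a).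

Lemma pickP (A : pzRingType) (x y : A) : in_xA x y -> y = x * pick x y.
Proof. move=> h; exact: (epsilon_spec (inhabits 0) (fun a : A => y = x * a) h). Qed.

Lemma ann_xe (A : pzRingType) (x e : A) : ann_r_gen_by x e -> e * e = e -> x * e = 0.
Proof. by move=> h ee; apply/h; exists 1; rewrite mulr1. Qed.

Lemma ann_key (A : pzRingType) (x e a a' : A) : ann_r_gen_by x e -> e * e = e ->
  x * a = x * a' -> (1 - e) * a = (1 - e) * a'.
Proof.
move=> h ee E.
have : x * (a - a') = 0 by rewrite mulrBr E subrr.
case/h => b hb; apply/eqP; rewrite -subr_eq0.
by rewrite -mulrBr hb mulrA mulrBl mul1r ee subrr mul0r.
Qed.

Definition iota_map (A : pzRingType) (x e : A) : A -> unit -> A :=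
  fun y _ => (1 - e) * pick x y.

Lemma constr_retract (A : pzRingType) (x e : A) : e * e = e -> ann_r_gen_by x e ->
  retract_of_free x (iota_map x e) (fun c => x * c tt).
Proof.
move=> ee h; rewrite /iota_map; split; [|split; [|split; [|split; [|split; [|split]]]]].
- by move=> y _; exists [:: tt]; case; case; left.
- move=> y z hy hz k; rewrite -mulrDr.
  apply: ann_key => //; rewrite -!pickP ?mulrDr -?pickP //.
  by case: hy hz => a -> [b ->]; exists (a + b); rewrite mulrDr.
- move=> y a hy k; rewrite -mulrA; apply: ann_key => //.
  rewrite -pickP; first by rewrite mulrA -pickP.
  by case: hy => b ->; exists (b * a); rewrite mulrA.
- by move=> c _; exists (c tt).
- by move=> c d _ _; rewrite mulrDr.
- by move=> c a _; rewrite mulrA.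
- move=> y hy; rewrite mulrA mulrBr mulr1 (ann_xe h ee) subr0; exact/esym/pickP.
Qed.

Lemma constr_graded (G : zmodType) (A : pzRingType) (Ad : G -> A -> Prop) :
  is_grading Ad -> forall h x e, Ad h x -> Ad 0 e -> e * e = e -> ann_r_gen_by x e ->
  principal_graded_projective Ad x.
Proof.
move=> hgr h x e hx he ee hann.
exists unit, (fun _ => - h), (iota_map x e), (fun c => x * c tt).
split; first exact: constr_retract.
split.
- move=> g y hy hg k; rewrite /iota_map.
  have [a' [ha' ya']] := gr_homog_gen hgr hx hg (pickP hy).
  rewrite (ann_key (a' := a') hann ee); last by rewrite -pickP.
  have -> : - h + g = 0 + (g - h) by rewrite add0r addrC.
  apply: gr_M => //; apply: gr_sub => //; exact: gr_one.
- move=> g c _ hc; have := gr_M hgr hx (hc tt).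
  by rewrite addNKr.
Qed.

Lemma proj_v (A : pzRingType) (x : A) (I : Type) (i : A -> I -> A) (p : (I -> A) -> A) :
  retract_of_free x i p -> forall (s : list I) (c : I -> A),
  (forall k, ~ List.In k s -> c k = 0) ->
  exists v, p c = x * v /\ forall a, (forall k, c k * a = 0) -> v * a = 0.
Proof.
case=> _ [_ [_ [pin [padd [pscal _]]]]].
elim=> [|b s IH] c hc.
- have -> : c = (fun k => (fun _ => 0) k * 0) by apply: functional_extensionality => k; rewrite mulr0 hc.
  exists 0; split; last by move=> a _; rewrite mul0r.
  by rewrite pscal ?mulr0 //; exists nil.
- pose eb := fun j => if excluded_middle_informative (j = b) then (1 : A) else 0.
  pose c' := fun j => if excluded_middle_informative (j = b) then (0 : A) else c j.
  have fc' : forall k, ~ List.In k s -> c' k = 0.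
    move=> k nk; rewrite /c'; case: excluded_middle_informative => // kb.
    by apply: hc => -[E|//]; apply: kb.
  have feb : finsupp eb.
    by exists [:: b] => k nk; rewrite /eb; case: excluded_middle_informative => // kb; case: nk; left.
  have ceq : c = (fun k => c' k + (fun j => eb j * c b) k).
    apply: functional_extensionality => k; rewrite /c' /eb.
    destruct (excluded_middle_informative (k = b)) as [E|E]; last by rewrite mul0r addr0.
    by rewrite add0r mul1r E.
  have [v' [pv' hv']] := IH _ fc'.
  have [w pw] := pin _ feb.
  exists (v' + w * c b); split.
  + have f1 : finsupp c' by exists s.
    have f2 : finsupp (fun j => eb j * c b).
      by case: feb => l hl; exists l => k nk; rewrite hl ?mul0r.
    by rewrite {1}ceq (padd _ _ f1 f2) (pscal _ _ feb) pv' pw -mulrA -mulrDr.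
  + move=> a ha; rewrite mulrDl hv'; first by rewrite add0r -mulrA ha mulr0.
    move=> k; rewrite /c'.
    by destruct (excluded_middle_informative (k = b)); rewrite ?mul0r ?ha.
Qed.

Lemma proj_ungr (A : pzRingType) (x : A) : principal_projective x ->
  exists v, x * v = x /\ forall a, x * a = 0 -> v * a = 0.
Proof.
case=> I [i [p R]].
have hx : in_xA x x by exists 1; rewrite mulr1.
have h0 : in_xA x 0 by exists 0; rewrite mulr0.
have R' := R; case: R' => fin [_ [isc [_ [_ [_ pi]]]]].
have [s hs] := fin x hx.
have [v [pv hv]] := proj_v R hs.
exists v; split; first by rewrite -pv pi.
move=> a xa; apply: hv => k.
by rewrite -isc // xa -{1}(mulr0 (0 : A)) isc // mulr0.
Qed.

Lemma gr_rick_of (G : zmodType) (A : pzRingType) (Ad : G -> A -> Prop) :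
  is_grading Ad -> forall h x v, Ad h x -> x * v = x -> (forall a, x * a = 0 -> v * a = 0) ->
  exists e, homogeneous Ad e /\ e * e = e /\ ann_r_gen_by x e.
Proof.
move=> hgr h x v hx xv hv.
have [s [f [us [hf ev]]]] := gr_dec hgr v.
pose u := if (0 : G) \in s then f 0 else 0.
have hu0 : Ad 0 u by rewrite /u; case: ifP => _ //; exact: gr_0.
have xu : x * u = x.
  have := gr_shift hgr (F := fun k => x * f k) (d := h) (g := h) (y := x) us _ hx.
  rewrite subrr /u => E; rewrite [RHS]E.
  + by case: ifP; rewrite ?mulr0.
  + by move=> k; rewrite addrC; apply: gr_M.
  + by rewrite -[RHS]xv ev big_distrr.
have ua : forall k a, Ad k a -> x * a = 0 -> u * a = 0.
  move=> k a ha xa.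
  have := gr_shift hgr (F := fun j => f j * a) (d := k) (g := k) (y := 0) us _ (gr_0 hgr k).
  rewrite subrr /u; case: ifP => h0 E; last by rewrite mul0r.
  apply/esym/E.
  + by move=> j; apply: gr_M.
  + have -> : \sum_(j <- s) f j * a = v * a by rewrite ev big_distrl.
    exact: hv.
have uall : forall a, x * a = 0 -> u * a = 0.
  move=> a xa; have [s2 [f2 [us2 [hf2 ea]]]] := gr_dec hgr a.
  have xf : forall k, k \in s2 -> x * f2 k = 0.
    move=> k ks.
    have := gr_shift hgr (F := fun j => x * f2 j) (d := h) (g := k + h) (y := 0) us2 _ (gr_0 hgr _).
    rewrite addrK ks => E; rewrite -E //.
    + by move=> j; rewrite addrC; apply: gr_M.
    + by rewrite -big_distrr -ea.
  rewrite ea big_distrr /=; apply: big1_seq => k /andP [_ ks].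
  exact: (ua k) (xf k ks).
have uu : u * u = u.
  have : x * (u - 1) = 0 by rewrite mulrBr xu mulr1 subrr.
  move/uall; rewrite mulrBr mulr1 => /eqP; rewrite subr_eq0 => /eqP //.
exists (1 - u); split; [|split].
- exists 0; apply: gr_sub => //; exact: gr_one.
- by rewrite mulrBl mul1r mulrBr mulr1 uu subrr subr0.
- move=> a; split.
  + by move=> xa; exists a; rewrite mulrBl mul1r uall ?subr0.
  + by case=> b ->; rewrite mulrA mulrBr mulr1 xu subrr mul0r.
Qed.

Theorem mainTheorem1 (G : zmodType) (A : pzRingType) (Ad : G -> A -> Prop)
    (hgr : is_grading Ad) :
  (graded_right_rickart Ad <->
     (forall x : A, homogeneous Ad x -> principal_projective x)) /\
  (graded_right_rickart Ad <->
     (forall x : A, homogeneous Ad x -> principal_graded_projective Ad x)) /\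
  (right_rickart A -> graded_right_rickart Ad).
Proof.
have P21 : (forall x : A, homogeneous Ad x -> principal_projective x) -> graded_right_rickart Ad.
  move=> H x hx; have [h hxh] := hx.
  have [v [xv hv]] := proj_ungr (H x hx).
  exact (gr_rick_of hgr hxh xv hv).
split; [split|split; [split|]].
- move=> H x hx; have [e [_ [ee ha]]] := H x hx.
  by exists unit, (iota_map x e), (fun c => x * c tt); apply: constr_retract.
- exact: P21.
- move=> H x hx; have [e [[d he] [ee ha]]] := H x hx.
  have [h hxh] := hx.
  exact (constr_graded hgr hxh (gr_idem hgr he ee) ee ha).
- move=> H; apply: P21 => x hx.
  by have [I [delta [i [p [R _]]]]] := H x hx; exists I, i, p.
- move=> H; apply: P21 => x hx; have [e [ee ha]] := H x.
  by exists unit, (iota_map x e), (fun c => x * c tt); apply: constr_retract.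
Qed.
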